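(* With the notation of the context, the semigroup $U$ is generated by elements $u\in U$ satisfying $\varphi_u(e)\le 2$ for all $e\in E$. Consequently, under the isomorphism $k[\mathrm{Rep}_{Q,c}(\beta,r)]^{\mathrm{SL}(\beta)}\cong k[U][y_b]_{b\in B}$, the ring of semi-invariants is generated by the monomials corresponding to such $u$ together with the variables $y_b$ (i.e. generators occur in multidegrees with $\varphi_u(e)\le 2$ for all endpoints $e$ and with each band variable of degree at most $1$).
   Context: $k$ algebraically closed; $Q$ acyclic quiver with coloring $c:Q_1\to S$ (each $c^{-1}(s)$ the arrow set of a directed path) such that $kQ/I_c$ is a gentle string algebra ($I_c$ generated by all $ba$ with $ha=tb$, $c(a)=c(b)$). $\beta$ a dimension vector; $\mathfrak{X}$ the set of $(x,s)\in Q_0\times S$ such that an arrow of color $s$ has head or tail $x$; $i(x,s)$, $o(x,s)$ the arrow of color $s$ with head, resp. tail, $x$ (or $\emptyset$). A vertex is lonely if it lies in exactly one pair of $\mathfrak{X}$, coupled if in two. $r$ is a maximal rank sequence: $r:Q_1\to\mathbb{N}$, $r(i(x,s))+r(o(x,s))\le\beta_x$ for all $(x,s)\in\mathfrak{X}$ ($r(\emptyset)=0$), maximal coordinatewise. $\mathrm{Rep}_{Q,c}(\beta,r)$: representations of $kQ/I_c$ of dimension $\beta$ with $\operatorname{rank}V_a\le r(a)$. Partition equivalence graph: vertex set $\Sigma=\{\alpha_i^{(x,s)}:(x,s)\in\mathfrak{X},1\le i\le\beta_x-1\}$, edges (i) $\alpha_i^{(x,s_1)}$—$\alpha_{\beta_x-i}^{(x,s_2)}$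 for coupled $x$ with pairs $(x,s_1),(x,s_2)$, $1\le i\le\beta_x-1$; (ii) $\alpha_i^{(x,s)}$—$\alpha_{\beta_y-i}^{(y,s)}$ for each arrow $a:x\to y$ of color $s$, $1\le i\le r(a)-1$. Path components with at least one edge are strings, cycle components are bands ($B$ = set of bands); $E$ is the set of string endpoints and $\Theta:E\to E$ swaps the endpoints of each string. For $u:Q_1\to\mathbb{N}$ ($u(\emptyset)=0$), $\varphi_u(\alpha_i^{(x,s)})=0$ if $x$ lonely, and $=[i=r(o(x,s))]u(o(x,s))+[i=\beta_x-r(i(x,s))]u(i(x,s))$ if $x$ coupled. $U=\{u:Q_1\to\mathbb{N}:\varphi_u(e)=\varphi_u(\Theta e)\ \forall e\in E\}$. The paper proves $k[\mathrm{Rep}_{Q,c}(\beta,r)]^{\mathrm{SL}(\beta)}\cong k[U][y_b]_{b\in B}$ (polynomial ring in one variable per band over $k[U]$). *)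

(* Defs.v *)
From mathcomp Require Import all_boot.
Set Implicit Arguments. Unset Strict Implicit. Unset Printing Implicit Defensive.

Section ColoredQuiver.
Variables (V A S : finType) (src tgt : A -> V) (col : A -> S).

Definition qpath (p : seq A) : bool :=
  if p is a :: p' then path (fun a b => tgt a == src b) a p' else true.

Definition acyclic : Prop :=
  forall (a : A) (p : seq A), qpath (a :: p) -> src a != tgt (last a p).

Definition color_paths : Prop :=
  forall s : S, exists p : seq A,
    [&& qpath p, uniq p & [forall a, (a \in p) == (col a == s)]].

(* kQ/I_c is gentle, where I_c is generated by the paths ba (tgt a = src b)
   with col a = col b *)
Definition gentle : Prop :=
  (forall x : V, #|[pred a | tgt a == x]| <= 2 /\ #|[pred a | src a == x]| <= 2) /\
  (forall a : A,
     #|[pred b | (src b == tgt a) && (col b == col a)]| <= 1 /\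
     #|[pred b | (src b == tgt a) && (col b != col a)]| <= 1) /\
  (forall b : A,
     #|[pred a | (tgt a == src b) && (col a == col b)]| <= 1 /\
     #|[pred a | (tgt a == src b) && (col a != col b)]| <= 1).

Definition inX (x : V) (s : S) : bool :=
  [exists a, (col a == s) && ((tgt a == x) || (src a == x))].

(* i(x,s), o(x,s); None stands for the empty arrow *)
Definition iarr (x : V) (s : S) : option A := [pick a | (tgt a == x) && (col a == s)].
Definition oarr (x : V) (s : S) : option A := [pick a | (src a == x) && (col a == s)].

Definition ov (f : A -> nat) (o : option A) : nat := if o is Some a then f a else 0.

Definition rank_ok (beta : V -> nat) (r : A -> nat) : Prop :=
  forall x s, inX x s -> ov r (iarr x s) + ov r (oarr x s) <= beta x.

Definition max_rank (beta : V -> nat) (r : A -> nat) : Prop :=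
  rank_ok beta r /\
  forall r' : A -> nat, rank_ok beta r' -> (forall a, r a <= r' a) ->
    forall a, r' a = r a.

Definition npairs (x : V) : nat := #|[pred s | inX x s]|.
Definition lonely (x : V) : bool := npairs x == 1.
Definition coupled (x : V) : bool := npairs x == 2.

Variables (beta : V -> nat) (r : A -> nat).

(* vertices alpha_i^{(x,s)} are encoded as triples (x, s, i) *)
Definition inSigma (v : V * S * nat) : bool :=
  let: (x, s, i) := v in [&& inX x s, 1 <= i & i <= beta x - 1].

Definition edge0 (v w : V * S * nat) : bool :=
  let: (x, s, i) := v in let: (y, s', j) := w in
  [&& x == y, s != s', coupled x, inX x s, inX x s', 1 <= i,
      i <= beta x - 1 & j == beta x - i]
  || [exists a, [&& col a == s, s' == s, src a == x, tgt a == y,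
                   1 <= i, i <= r a - 1 & j == beta y - i]].

Definition pedge (v w : V * S * nat) : bool := edge0 v w || edge0 w v.

Definition pconnected (v w : V * S * nat) : Prop :=
  exists p : seq (V * S * nat), path pedge v p && (last v p == w).

(* E: the endpoints of strings, i.e. vertices of Sigma of degree exactly one
   (the graph has maximal degree 2, so these are exactly string endpoints) *)
Definition endpoint (e : V * S * nat) : Prop :=
  inSigma e /\ exists w, pedge e w /\ forall w', pedge e w' -> w' = w.

Definition theta_rel (e e' : V * S * nat) : Prop :=
  endpoint e /\ endpoint e' /\ e != e' /\ pconnected e e'.

Definition phi (u : A -> nat) (v : V * S * nat) : nat :=
  let: (x, s, i) := v in
  if lonely x then 0 else
    (i == ov r (oarr x s)) * ov u (oarr x s)
    + (i == beta x - ov r (iarr x s)) * ov u (iarr x s).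

Definition inU (u : A -> nat) : Prop :=
  forall e e', theta_rel e e' -> phi u e = phi u e'.

End ColoredQuiver.

(* Main.v *)
Require Import Defs.
From Stdlib Require List.
From Stdlib Require Import ClassicalEpsilon Classical.
From mathcomp Require Import all_boot.
From mathcomp Require zify.

Module Aux.
Import zify.
Set Implicit Arguments. Unset Strict Implicit. Unset Printing Implicit Defensive.

Lemma sum_opt (A : finType) (F : option A -> nat) :
  \sum_(x : option A) F x = F None + \sum_(a : A) F (Some a).
Proof.
rewrite (bigD1 None) //=; congr (_ + _).
rewrite (reindex_omap Some id) //=.
  by apply: eq_bigl => a; rewrite eqxx.
by case.
Qed.

Lemma sum_delta (A : finType) (F : A -> nat) (a : A) :
  \sum_y F y * (y == a) = F a.
Proof.
rewrite (bigD1 a) //= eqxx muln1 big1 ?addn0 // => y /negbTE ->; by rewrite muln0.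
Qed.


Lemma sum_delta_nat (A : finType) (a : A) : \sum_y nat_of_bool (y == a) = 1.
Proof. by rewrite -[RHS](sum_delta (fun _ => 1) a); apply: eq_bigr => y _; rewrite mul1n. Qed.

Lemma sel (A : finType) (P : pred A) (g : A -> nat) t :
  t <= \sum_a P a * g a ->
  exists h : A -> nat, (forall a, h a <= g a) /\ (forall a, ~~ P a -> h a = 0) /\ \sum_a h a = t.
Proof.
elim: t => [|t IH] ht.
  by exists (fun _ => 0); split=> //; split=> //; rewrite big1.
have [h [h1 [h2 h3]]] := IH (ltnW ht).
have eh : \sum_a P a * h a = t.
  rewrite -h3; apply: eq_bigr => a _.
  by case: (boolP (P a)) => [_|/h2 ->]; rewrite ?mul1n ?mul0n.
case: (boolP [exists a, P a && (h a < g a)]).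
  move=> /existsP[a /andP[pa lt]].
  exists (fun y => h y + (y == a)); split; last split.
  - move=> y; case: (eqVneq y a) => [->|_] /=; [by rewrite addn1|by rewrite addn0].
  - move=> y py; rewrite h2 //=; case: (eqVneq y a) => // e; by rewrite e pa in py.
  - by rewrite big_split /= h3 sum_delta_nat addn1.
rewrite negb_exists => /forallP hn.
have le : \sum_a P a * g a <= \sum_a P a * h a.
  apply: leq_sum => a _; have := hn a; case: (P a) => //=; by rewrite -leqNgt !mul1n.
by move: le; rewrite eh leqNgt ht.
Qed.

Section Abs.
Variable T : eqType.
Variable pt : T -> option T.
Hypothesis pt_sym : forall x y, pt x = Some y -> pt y = Some x.
Hypothesis pt_neq : forall x y, pt x = Some y -> x != y.

Definition W (f : T -> nat) (A : finType) (en : A -> bool -> T) (g : A -> nat) :=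
  \sum_a (f (en a true) + f (en a false)) * g a.
Definition Lc (A : finType) (en : A -> bool -> T) (g : A -> nat) (x : T) :=
  W (fun z => nat_of_bool (z == x)) en g.
Definition Mc (A : finType) (en : A -> bool -> T) (g : A -> nat) :=
  W (fun z => nat_of_bool (pt z != None)) en g.
Definition inUa (A : finType) (en : A -> bool -> T) (g : A -> nat) :=
  forall x y, pt x = Some y -> Lc en g x = Lc en g y.
Definition minimal (A : finType) (en : A -> bool -> T) (g : A -> nat) :=
  inUa en g /\ (exists a, 0 < g a) /\
  forall h, inUa en h -> (forall a, h a <= g a) ->
    (forall a, h a = 0) \/ (forall a, h a = g a).

Lemma pair_cnt w w' x y : pt w = Some w' -> pt x = Some y ->
  (w == x) + (w' == x) = (w == y) + (w' == y).
Proof.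
move=> hw hx.
have nw := pt_neq hw. have hw' := pt_sym hw.
have nw1 : (w == w') = false by apply/negbTE.
have nw2 : (w' == w) = false by rewrite eq_sym; apply/negbTE.
case: (eqVneq x w) => [exw|nxw].
  subst x. rewrite hw in hx; case: hx => <-.
  by rewrite ?eqxx ?nw1 ?nw2.
case: (eqVneq x w') => [exw'|nxw'].
  subst x. rewrite hw' in hx; case: hx => <-.
  by rewrite ?eqxx ?nw1 ?nw2.
case: (eqVneq y w) => [eyw|nyw].
  subst y. have := pt_sym hx. rewrite hw => -[] e. by rewrite e eqxx in nxw'.
case: (eqVneq y w') => [eyw'|nyw'].
  subst y. have := pt_sym hx. rewrite hw' => -[] e. by rewrite e eqxx in nxw.
by [].  
Qed.

Lemma cnt2 (A : finType) (en : A -> bool -> T) (f : T -> nat) c (jc jd : bool) :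
  jc != jd -> f (en c true) + f (en c false) = f (en c jc) + f (en c jd).
Proof. by case: jc; case: jd => //= _; rewrite addnC. Qed.

Lemma W_ext (A : finType) f (en : A -> bool -> T) g1 g2 :
  (forall a, g1 a = g2 a) -> W f en g1 = W f en g2.
Proof. by move=> e; apply: eq_bigr => a _; rewrite e. Qed.

Lemma Lc_delta (A : finType) (en : A -> bool -> T) a x :
  Lc en (fun y => nat_of_bool (y == a)) x = (en a true == x) + (en a false == x).
Proof. by rewrite /Lc /W sum_delta. Qed.

Lemma Lc_le2 (A : finType) (en : A -> bool -> T) a x :
  Lc en (fun y => nat_of_bool (y == a)) x <= 2.
Proof. rewrite Lc_delta; by case: (_ == x); case: (_ == x). Qed.

Lemma Lc_pos (A : finType) (en : A -> bool -> T) g x : 0 < Lc en g x ->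
  exists a j, en a j = x /\ 0 < g a.
Proof.
rewrite /Lc /W => hp.
have [a _ ha] : exists2 a, true & 0 < (((en a true == x) + (en a false == x)) * g a).
  apply/exists_inP; apply: contraLR hp; rewrite negb_exists_in => /forall_inP h.
  rewrite -leqNgt leqn0 sum_nat_eq0; apply/forall_inP => a _.
  by have := h a isT; rewrite -leqNgt leqn0.
move: ha; rewrite muln_gt0 => /andP[h1 h2].
case e1: (en a true == x); first by exists a, true; rewrite (eqP e1).
case e2: (en a false == x); first by exists a, false; rewrite (eqP e2).
by rewrite e1 e2 in h1.
Qed.

Lemma Lc_ge (A : finType) (en : A -> bool -> T) g a j :
  g a <= Lc en g (en a j).
Proof.
rewrite /Lc /W (bigD1 a) //=.
apply: leq_trans (leq_addr _ _).
by case: j; rewrite eqxx ?addn1 ?add1n leq_pmull.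
Qed.

Lemma minimal_delta (A : finType) (en : A -> bool -> T) g a :
  minimal en g -> 0 < g a -> inUa en (fun y => nat_of_bool (y == a)) ->
  forall z, Lc en g z <= 2.
Proof.
move=> [_ [_ hm]] ga hU z.
have hle : forall y, nat_of_bool (y == a) <= g y.
  by move=> y; case: (eqVneq y a) => [->|].
case: (hm _ hU hle).
  by move/(_ a); rewrite eqxx.
move=> e. have := Lc_le2 en a z; rewrite /Lc (W_ext _ _ (g1 := g) (g2 := fun y => nat_of_bool (y == a))) //.
Qed.

Section Split.
Variables (A : finType) (en : A -> bool -> T) (g : A -> nat) (a b : A) (ja jb : bool).

Definition enS (y : option A) (j : bool) : T :=
  match y with Some y => en y j | None => if j then en a (~~ ja) else en b (~~ jb) end.
Definition gS (y : option A) : nat :=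
  match y with Some y => g y - (y == a) - (y == b) | None => 1 end.
Definition piS (h : option A -> nat) (y : A) : nat :=
  h (Some y) + (y == a) * h None + (y == b) * h None.

Lemma cnt_sw f c (jc : bool) :
  f (en c true) + f (en c false) = f (en c jc) + f (en c (~~ jc)).
Proof. by case: jc => //=; rewrite addnC. Qed.

Lemma W_piS f h : W f en (piS h) = W f enS h + h None * (f (en a ja) + f (en b jb)).
Proof.
rewrite /W sum_opt /= /piS.
have -> : \sum_y (f (en y true) + f (en y false)) * (h (Some y) + (y == a) * h None + (y == b) * h None) =
  \sum_y (f (en y true) + f (en y false)) * h (Some y) +
  (\sum_y (f (en y true) + f (en y false)) * (y == a)) * h None +
  (\sum_y (f (en y true) + f (en y false)) * (y == b)) * h None.
  rewrite !big_distrl -!big_split /=; apply: eq_bigr => y _.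
  rewrite !mulnDr !mulnA; done.
rewrite !sum_delta (cnt_sw f a ja) (cnt_sw f b jb); lia.
Qed.

Hypotheses (nab : a != b) (ga : 0 < g a) (gb : 0 < g b).

Lemma W_gS f : W f enS gS + f (en a ja) + f (en b jb) = W f en g.
Proof.
rewrite /W sum_opt /=.
have -> : \sum_y (f (en y true) + f (en y false)) * g y =
  \sum_y (f (en y true) + f (en y false)) * (g y - (y == a) - (y == b)) +
  \sum_y (f (en y true) + f (en y false)) * (y == a) +
  \sum_y (f (en y true) + f (en y false)) * (y == b).
  rewrite -!big_split /=; apply: eq_bigr => y _.
  rewrite -!mulnDr; congr (_ * _).
  case: (eqVneq y a) => [->|nya].
    by rewrite (negbTE nab) /=; lia.
  case: (eqVneq y b) => [->|nyb] /=; [lia|].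
  by rewrite !subn0 !addn0.
rewrite !sum_delta (cnt_sw f a ja) (cnt_sw f b jb); lia.
Qed.

End Split.

Lemma Lc_gS (A : finType) (en : A -> bool -> T) g a b ja jb x :
  a != b -> 0 < g a -> 0 < g b ->
  Lc (enS en a b ja jb) (gS g a b) x + ((en a ja == x) + (en b jb == x)) = Lc en g x.
Proof. move=> nab ga gb; rewrite addnA; exact: (W_gS en ja jb nab ga gb). Qed.

Lemma Lc_piS (A : finType) (en : A -> bool -> T) a b ja jb h x :
  Lc en (piS a b h) x = Lc (enS en a b ja jb) h x + h None * ((en a ja == x) + (en b jb == x)).
Proof. by rewrite /Lc (W_piS en a b ja jb). Qed.

Lemma Mc_gS (A : finType) (en : A -> bool -> T) g a b ja jb :
  a != b -> 0 < g a -> 0 < g b -> pt (en a ja) != None -> pt (en b jb) != None ->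
  Mc (enS en a b ja jb) (gS g a b) + 2 = Mc en g.
Proof.
move=> nab ga gb p1 p2; rewrite /Mc -(W_gS en ja jb nab ga gb) p1 p2 /=; lia.
Qed.

Theorem min_bound n : forall (A : finType) (en : A -> bool -> T) g,
  Mc en g < n -> minimal en g -> forall z, Lc en g z <= 2.
Proof.
elim: n => [//|n IH] A en g hM hmin z.
have [hU [[a0 ga0] hm]] := hmin.
case: (boolP [exists a, exists j, [&& 0 < g a, pt (en a j) != None, en a j != z & pt (en a j) != Some z]]).
- move=> /existsP[a /existsP[ja /and4P[ga pw nwz nw'z]]].
  case ew: (pt (en a ja)) pw nw'z => [w'|] // _ nw'z.
  have w'z : w' != z by apply: contraNneq nw'z => ->.
  have : 0 < Lc en g w'.
    by rewrite -(hU _ _ ew); exact: leq_trans ga (Lc_ge _ _ _ _).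
  move=> /Lc_pos [b [jb [eb gb]]].
  case: (eqVneq a b) => [eab|nab].
  + subst b.
    apply: (minimal_delta hmin ga) => x y hxy.
    rewrite !Lc_delta.
    have njab : ja != jb.
      apply: contraTneq (pt_neq ew) => e; by rewrite -eb -e eqxx.
    have ct : forall x0, (en a true == x0) + (en a false == x0) = (en a ja == x0) + (en a jb == x0).
      by move=> x0; apply: (cnt2 en (fun t => nat_of_bool (t == x0))).
    by rewrite !ct eb; apply: pair_cnt.
  + have pw : pt (en a ja) != None by rewrite ew.
    have pw' : pt (en b jb) != None by rewrite eb (pt_sym ew).
    have hM' := @Mc_gS _ en g a b ja jb nab ga gb pw pw'.
    have hmin' : minimal (enS en a b ja jb) (gS g a b).
      split; last split.
      * move=> x y hxy.
        have e1 := @Lc_gS _ en g a b ja jb x nab ga gb.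
        have e2 := @Lc_gS _ en g a b ja jb y nab ga gb.
        have e3 := pair_cnt ew hxy.
        have e4 := hU _ _ hxy.
        rewrite eb in e1 e2. lia.
      * by exists None.
      * move=> h hUh hle.
        have hUp : inUa en (piS a b h).
          move=> x y hxy; rewrite !(@Lc_piS _ en a b ja jb) (hUh _ _ hxy) eb.
          by rewrite (pair_cnt ew hxy).
        have hlep : forall y, piS a b h y <= g y.
          move=> y; rewrite /piS; have := hle (Some y); have := hle None; rewrite /gS /=.
          case: (eqVneq y a) => [->|nya].
            rewrite (negbTE nab) /=; lia.
          case: (eqVneq y b) => [->|nyb] /=; lia.
        case: (hm _ hUp hlep) => [h0|hg].
          left; case=> [y|].
            by have := h0 y; rewrite /piS; lia.
          by have := h0 a; rewrite /piS eqxx; lia.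
        right.
        have hN : h None = 1.
          have := hle None; have := hg a; have := hle (Some a).
          rewrite /piS /gS /= eqxx (negbTE nab) /=; lia.
        case=> [y|] //=; have := hg y; rewrite /piS hN.
        case: (eqVneq y a) => [->|nya].
          rewrite (negbTE nab) /=; lia.
        case: (eqVneq y b) => [->|nyb] /=; lia.
    have := IH _ _ _ _ hmin' z.
    have := @Lc_gS _ en g a b ja jb z nab ga gb.
    rewrite eb (negbTE nwz) (negbTE w'z) addn0 => ->.
    apply; lia.
- move=> hno.
  have hends : forall a j, 0 < g a -> pt (en a j) != None -> en a j = z \/ pt (en a j) = Some z.
    move=> a j ga pj; case: (eqVneq (en a j) z) => [->|nz]; [by left|right].
    apply/eqP; apply: contraNT hno => hn.
    by apply/existsP; exists a; apply/existsP; exists j; rewrite ga pj nz hn.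
  case ez: (pt z) => [z'|].
  + have ez' := pt_sym ez. have nzz := pt_neq ez.
    have hends2 : forall a j, 0 < g a -> pt (en a j) != None -> en a j = z \/ en a j = z'.
      move=> a j ga pj; case: (hends a j ga pj) => [->|e]; [by left|right].
      by have := pt_sym e; rewrite ez => -[].
    have hUc : forall h, (forall a, h a <= g a) -> Lc en h z = Lc en h z' -> inUa en h.
      move=> h hle hzz.
      have L0 : forall x0, pt x0 != None -> x0 != z -> x0 != z' -> Lc en h x0 = 0.
        move=> x0 p0 n1 n2; rewrite /Lc /W big1 // => a _.
        case: (posnP (h a)) => [->|ha]; first by rewrite muln0.
        have ga : 0 < g a := leq_trans ha (hle a).
        have e : forall j, (en a j == x0) = false.
          move=> j; apply/negbTE; apply/eqP => ej.
          have pj : pt (en a j) != None by rewrite ej.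
          by case: (hends2 a j ga pj); rewrite ej => e; [rewrite e eqxx in n1|rewrite e eqxx in n2].
        by rewrite !e.
      move=> x y hxy.
      case: (eqVneq x z) => [exz|nxz].
        by subst x; rewrite ez in hxy; case: hxy => <-.
      case: (eqVneq x z') => [exz'|nxz'].
        by subst x; rewrite ez' in hxy; case: hxy => <-.
      have nyz : y != z.
        apply/eqP => eyz; subst y; have := pt_sym hxy; rewrite ez => -[] e.
        by rewrite e eqxx in nxz'.
      have nyz' : y != z'.
        apply/eqP => eyz; subst y; have := pt_sym hxy; rewrite ez' => -[] e.
        by rewrite e eqxx in nxz.
      by rewrite !L0 // ?hxy ?(pt_sym hxy).
    pose xa a := (en a true == z) + (en a false == z).
    pose ya a := (en a true == z') + (en a false == z').
    have hsum2 : forall a, xa a + ya a <= 2.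
      move=> a; rewrite /xa /ya.
      have f1 : forall t : T, (t == z) + (t == z') <= 1.
        by move=> t; case: (eqVneq t z) => [->|]; rewrite ?(negbTE nzz) //; case: (t == z').
      have := f1 (en a true); have := f1 (en a false); lia.
    case: (boolP [exists a, (0 < g a) && (xa a == ya a)]).
      move=> /existsP[a /andP[ga /eqP exy]].
      apply: (minimal_delta hmin ga); apply: hUc.
        by move=> y; case: (eqVneq y a) => [->|].
      by rewrite !Lc_delta.
    rewrite negb_exists => /forallP hne.
    pose PX c a := [&& 0 < g a, xa a == c & ya a == 0].
    pose PY c a := [&& 0 < g a, ya a == c & xa a == 0].
    pose X c := \sum_a PX c a * g a.
    pose Y c := \sum_a PY c a * g a.
    have eX : Lc en g z = X 1 + 2 * X 2.
      rewrite /X big_distrr -big_split /Lc /W; apply: eq_bigr => a _ /=.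
      rewrite /PX.
      case: (posnP (g a)) => [->|ga]; first by rewrite !muln0.
      have := hne a; rewrite ga /= => hn.
      have := hsum2 a; move: hn; rewrite -/(xa a) -/(ya a).
      case: (xa a) => [|[|[|k]]]; case: (ya a) => [|[|[|l]]] //= _ _; lia.
    have eY : Lc en g z' = Y 1 + 2 * Y 2.
      rewrite /Y big_distrr -big_split /Lc /W; apply: eq_bigr => a _ /=.
      rewrite /PY.
      case: (posnP (g a)) => [->|ga]; first by rewrite !muln0.
      have := hne a; rewrite ga /= => hn.
      have := hsum2 a; move: hn; rewrite -/(xa a) -/(ya a).
      case: (xa a) => [|[|[|k]]]; case: (ya a) => [|[|[|l]]] //= _ _; lia.
    have build : forall c1 t1 c2 t2, 0 < t1 -> 0 < c1 -> 0 < c2 -> c1 * t1 = c2 * t2 ->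
        c1 * t1 < Lc en g z -> t1 <= X c1 -> t2 <= Y c2 -> False.
      move=> c1 t1 c2 t2 t1p c1p c2p ect lt hx hy.
      have [h1 [h1g [h1P h1s]]] := sel hx.
      have [h2 [h2g [h2P h2s]]] := sel hy.
      have hPX : forall a, PX c1 a -> h2 a = 0.
        move=> a /and3P[_ /eqP xc _].
        apply: h2P; rewrite /PY; apply/negP => /and3P[_ _ /eqP x0].
        by rewrite xc in x0; rewrite x0 in c1p.
      have hPY : forall a, PY c2 a -> h1 a = 0.
        move=> a /and3P[_ _ /eqP x0].
        apply: h1P; rewrite /PX; apply/negP => /and3P[_ /eqP xc _].
        by rewrite xc in x0; rewrite x0 in c1p.
      have disj : forall a, h1 a = 0 \/ h2 a = 0.
        move=> a; case: (boolP (PX c1 a)) => [/hPX|/h1P]; [by right|by left].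
      have hle : forall a, h1 a + h2 a <= g a.
        by move=> a; case: (disj a) => ->; rewrite ?addn0 ?add0n.
      have L1 : Lc en (fun a => h1 a + h2 a) z = c1 * t1.
        rewrite -h1s big_distrr /Lc /W; apply: eq_bigr => a _ /=.
        rewrite -/(xa a).
        case: (boolP (PX c1 a)) => [pa|/h1P ->].
          by move: (pa) => /and3P[_ /eqP xc _]; rewrite (hPX a pa) addn0 xc.
        case: (boolP (PY c2 a)) => [/and3P[_ _ /eqP x0]|/h2P ->]; last by rewrite addn0 !muln0.
        by rewrite x0 mul0n muln0.
      have L2 : Lc en (fun a => h1 a + h2 a) z' = c2 * t2.
        rewrite -h2s big_distrr /Lc /W; apply: eq_bigr => a _ /=.
        rewrite -/(ya a).
        case: (boolP (PY c2 a)) => [pa|/h2P ->].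
          by move: (pa) => /and3P[_ /eqP yc _]; rewrite (hPY a pa) add0n yc.
        case: (boolP (PX c1 a)) => [/and3P[_ _ /eqP y0]|/h1P ->]; last by rewrite addn0 !muln0.
        by rewrite y0 mul0n muln0.
      have hUh := hUc _ hle (etrans L1 (etrans ect (esym L2))).
      case: (hm _ hUh hle) => [h0|hg].
        have : \sum_a h1 a = 0.
          by rewrite big1 // => a _; have := h0 a; lia.
        by rewrite h1s => e; rewrite e in t1p.
      have : Lc en (fun a => h1 a + h2 a) z = Lc en g z by apply: W_ext.
      by rewrite L1 => e; rewrite e ltnn in lt.
    rewrite leqNgt; apply/negP => k3.
    have e3 := hU _ _ ez.
    case: (boolP ((0 < X 1) && (0 < Y 1))) => [/andP[p q]|n1].
      apply: (build 1 1 1 1) => //; lia.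
    case: (boolP ((0 < X 2) && (0 < Y 2))) => [/andP[p q]|n2].
      apply: (build 2 1 2 1) => //; lia.
    case: (boolP ((1 < X 1) && (0 < Y 2))) => [/andP[p q]|n3].
      apply: (build 1 2 2 1) => //; lia.
    case: (boolP ((0 < X 2) && (1 < Y 1))) => [/andP[p q]|n4].
      apply: (build 2 1 1 2) => //; lia.
    lia.
  +
    apply: (minimal_delta hmin ga0) => x y hxy.
    have hf : forall j x0 y0, pt x0 = Some y0 -> (en a0 j == x0) = false.
      move=> j x0 y0 h0; apply/negbTE; apply/eqP => ej.
      have pj : pt (en a0 j) != None by rewrite ej h0.
      case: (hends a0 j ga0 pj) => e.
        by move: h0; rewrite -ej e ez.
      by have := pt_sym e; rewrite ez.
    by rewrite !Lc_delta !(hf _ _ _ hxy) !(hf _ _ _ (pt_sym hxy)).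
Qed.

Lemma W_add (A : finType) f (en : A -> bool -> T) g1 g2 :
  W f en (fun a => g1 a + g2 a) = W f en g1 + W f en g2.
Proof. by rewrite /W -big_split; apply: eq_bigr => a _; rewrite mulnDr. Qed.

Lemma exmin n : forall (A : finType) (en : A -> bool -> T) h, \sum_a h a < n ->
  inUa en h -> (exists a, 0 < h a) -> exists g, minimal en g /\ forall a, g a <= h a.
Proof.
elim: n => [//|n IH] A en h hs hU hnz.
case: (classic (minimal en h)) => [hm|hnm].
  by exists h; split.
have : exists h', inUa en h' /\ (forall a, h' a <= h a) /\ ~ (forall a, h' a = 0) /\ ~ (forall a, h' a = h a).
  apply: NNPP => hn; apply: hnm; split=> //; split=> // h' hU' hle'.
  case: (classic (forall a, h' a = 0)) => [|n0]; first by left.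
  case: (classic (forall a, h' a = h a)) => [|n1]; first by right.
  by exfalso; apply: hn; exists h'.
move=> [h' [hU' [hle' [n0 n1]]]].
have [a1 ha1] : exists a, 0 < h' a.
  apply: NNPP => hn; apply: n0 => a; apply: NNPP => e; apply: hn; exists a.
  by rewrite lt0n; apply/eqP.
have [a2 ha2] : exists a, h' a < h a.
  apply: NNPP => hn; apply: n1 => a; apply/eqP; rewrite eqn_leq hle' /= leqNgt.
  by apply/negP => lt; apply: hn; exists a.
have lt : \sum_a h' a < \sum_a h a.
  have : \sum_a (h' a + (a == a2)) <= \sum_a h a.
    apply: leq_sum => a _; case: (eqVneq a a2) => [->|_] /=; [by rewrite addn1|by rewrite addn0].
  by rewrite big_split /= sum_delta_nat addn1.
have [g [gm gle]] := IH A en h' (leq_trans lt (hs : _ <= n)) hU' (ex_intro _ a1 ha1).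
by exists g; split=> // a; exact: leq_trans (gle a) (hle' a).
Qed.

Lemma decomp n : forall (A : finType) (en : A -> bool -> T) u, \sum_a u a < n ->
  inUa en u -> exists gs : seq (A -> nat),
    (forall g, List.In g gs -> minimal en g) /\ (forall a, u a = \sum_(g <- gs) g a).
Proof.
elim: n => [//|n IH] A en u hs hU.
case: (classic (exists a, 0 < u a)) => [hnz|hz].
- have [g [gm gle]] := exmin (ltnSn _) hU hnz.
  have [_ [[a1 ga1] _]] := gm.
  pose u' a := u a - g a.
  have hU' : inUa en u'.
    move=> x y hxy.
    have e : forall x0, Lc en u' x0 + Lc en g x0 = Lc en u x0.
      move=> x0; rewrite /Lc -W_add; apply: W_ext => a; rewrite /u' subnK //.
    have := e x; have := e y; have := hU _ _ hxy; have := gm.1 _ _ hxy; lia.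
  have lt : \sum_a u' a < n.
    have : \sum_a u' a + \sum_a g a = \sum_a u a.
      by rewrite -big_split; apply: eq_bigr => a _; rewrite /= /u' subnK.
    have : g a1 <= \sum_a g a by rewrite (bigD1 a1) //= leq_addr.
    lia.
  have [gs [gsm gss]] := IH A en u' lt hU'.
  exists (g :: gs); split.
    by move=> g' [<-|/gsm].
  by move=> a; rewrite big_cons -gss /u' subnKC.
- exists [::]; split=> // a; rewrite big_nil.
  by apply/eqP; rewrite -leqn0 leqNgt; apply/negP => p; apply: hz; exists a.
Qed.

End Abs.

Section Graph.
Variables (T : eqType) (e : rel T).
Hypothesis esym : forall x y, e x y = e y x.
Hypothesis deg : forall v w1 w2 w3, e v w1 -> e v w2 -> e v w3 ->
  w1 = w2 \/ w1 = w3 \/ w2 = w3.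

Definition conn x y := exists p, path e x p && (last x p == y).
Definition endp d := exists w, e d w /\ forall w', e d w' -> w' = w.

Lemma forced p : forall prev x q, e prev x -> path e x p -> path e x q ->
  uniq (prev :: x :: p) -> uniq (prev :: x :: q) ->
  (exists r, q = p ++ r) \/ (exists r, p = q ++ r).
Proof.
elim: p => [|y p IH] prev x q epx pp pq up uq; first by left; exists q.
case: q pq uq => [|z q] pq uq; first by right; exists (y :: p).
move: pp pq => /= /andP[exy pp] /andP[exz pq].
have nyp : y != prev.
  by move: up; rewrite /= !inE => /andP[/norP[_ /norP[/eqP h _]] _]; apply/eqP => e'; apply: h.
have nzp : z != prev.
  by move: uq; rewrite /= !inE => /andP[/norP[_ /norP[/eqP h _]] _]; apply/eqP => e'; apply: h.
have eyz : y = z.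
  have exp : e x prev by rewrite esym.
  case: (deg exp exy exz) => [h|[h|h]] //.
    by rewrite h eqxx in nyp.
  by rewrite h eqxx in nzp.
subst z.
have up' : uniq (x :: y :: p) by case/andP: up.
have uq' : uniq (x :: y :: q) by case/andP: uq.
case: (IH x y q exy pp pq up' uq') => [[r ->]|[r ->]].
  by left; exists r.
by right; exists r.
Qed.

Lemma ext_contra d1 d p r : endp d1 -> p != [::] -> path e d (p ++ r) ->
  uniq (d :: p ++ r) -> last d p = d1 -> r = [::].
Proof.
move=> [w [ew hw]] np pp up ld.
case: r pp up => [//|z r] pp up.
exfalso.
case/lastP: p np pp up ld => [//|q y] _ pp up ld.
rewrite last_rcons in ld; subst y.
move: pp; rewrite cat_path rcons_path last_rcons => /andP[/andP[pq eq] /= /andP[ez _]].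
have e1 : e d1 (last d q) by rewrite esym.
have h1 := hw _ e1. have h2 := hw _ ez.
move: up; rewrite -cat_cons cat_uniq => /and3P[_ hh _].
have hin : last d q \in d :: rcons q d1.
  have := mem_last d q; rewrite !inE mem_rcons inE => /orP[->//|h]; by rewrite h !orbT.
move/negP: hh; apply; apply/hasP; exists z; first by rewrite inE eqxx.
by rewrite /= h2 -h1.
Qed.

Lemma uniq_partner d d1 d2 : endp d -> endp d1 -> endp d2 -> d != d1 -> d != d2 ->
  conn d d1 -> conn d d2 -> d1 = d2.
Proof.
move=> [w [ew hw]] ed1 ed2 n1 n2 [p1 /andP[pp1 /eqP l1]] [p2 /andP[pp2 /eqP l2]].
case: (shortenP pp1) l1 => q1 pq1 uq1 _ l1.
case: (shortenP pp2) l2 => q2 pq2 uq2 _ l2.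
case: q1 pq1 uq1 l1 => [|y1 q1] pq1 uq1 l1; first by rewrite -l1 eqxx in n1.
case: q2 pq2 uq2 l2 => [|y2 q2] pq2 uq2 l2; first by rewrite -l2 eqxx in n2.
move: (pq1) (pq2) => /= /andP[e1 pq1'] /andP[e2 pq2'].
have ey1 := hw _ e1. have ey2 := hw _ e2. subst y1 y2.
case: (forced e1 pq1' pq2' uq1 uq2) => [[r er]|[r er]].
  rewrite er -cat_cons in pq2 uq2 l2.
  have er0 := ext_contra ed1 (isT : (w :: q1) != [::]) pq2 uq2 l1.
  by move: l2; rewrite er0 cats0 l1.
rewrite er -cat_cons in pq1 uq1 l1.
have er0 := ext_contra ed2 (isT : (w :: q2) != [::]) pq1 uq1 l2.
by move: l1; rewrite er0 cats0 l2.
Qed.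

Lemma conn_sym x y : conn x y -> conn y x.
Proof.
move=> [p /andP[pp /eqP ly]].
exists (rev (belast x p)); apply/andP; split.
  have := rev_path e x p; rewrite ly => ->.
  by rewrite (@eq_path _ _ e) // => a b /=; rewrite esym.
case: p pp ly => [|z p] _ ly /=; first by rewrite -ly.
by rewrite rev_cons last_rcons.
Qed.

End Graph.

Section Inst.
Variables (V A S : finType) (src tgt : A -> V) (col : A -> S).
Hypothesis hac : acyclic src tgt.
Hypothesis hcp : color_paths src tgt col.

Let R := fun a b : A => tgt a == src b.

Lemma qpath_tail p1 a p2 : qpath src tgt (p1 ++ a :: p2) -> path R a p2.
Proof.
case: p1 => [//|h t] /=; rewrite cat_path => /andP[_] /=.
by case/andP.
Qed.

Lemma acyc_src b q c rest : path R b (q ++ c :: rest) -> src b != src c.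
Proof.
rewrite cat_path => /andP[p1 /= /andP[e _]].
have := hac p1; by rewrite (eqP e).
Qed.

Lemma acyc_tgt b q c rest : path R b (q ++ c :: rest) -> tgt b != tgt c.
Proof.
case: q => [|d q'] /=.
  case/andP => /eqP e _; rewrite e; have := hac (p := [::]) isT; done.
case/andP => /eqP e; rewrite e cat_path => /andP[p1 /= /andP[e2 _]].
have : qpath src tgt (d :: rcons q' c) by rewrite /= rcons_path p1 /=; exact: e2.
by move/hac; rewrite last_rcons.
Qed.

Lemma arrow_uniq (f : A -> V) a1 a2 :
  (forall b q c rest, path R b (q ++ c :: rest) -> f b != f c) ->
  f a1 = f a2 -> col a1 = col a2 -> a1 = a2.
Proof.
move=> hf ef ec.
have [p /and3P[qp up /forallP hp]] := hcp (col a1).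
have i1 : a1 \in p by rewrite (eqP (hp a1)).
have i2 : a2 \in p by rewrite (eqP (hp a2)) ec.
case: (eqVneq a1 a2) => // nab.
case: (splitPr i1) qp i2 => p1 p2 qp.
rewrite mem_cat inE eq_sym (negbTE nab) /=; case/orP=> i2.
  case: (splitPr i2) qp => q1 q2; rewrite -catA /= => qp.
  have := hf a2 q2 a1 p2 (qpath_tail qp); by rewrite ef eqxx.
case: (splitPr i2) qp => q1 q2 qp.
have := hf a1 q1 a2 q2 (qpath_tail qp); by rewrite ef eqxx.
Qed.

Lemma src_uniq a1 a2 : src a1 = src a2 -> col a1 = col a2 -> a1 = a2.
Proof. apply: arrow_uniq; exact: acyc_src. Qed.
Lemma tgt_uniq a1 a2 : tgt a1 = tgt a2 -> col a1 = col a2 -> a1 = a2.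
Proof. apply: arrow_uniq; exact: acyc_tgt. Qed.

End Inst.

Section Inst2.
Variables (V A S : finType) (src tgt : A -> V) (col : A -> S).
Hypothesis hac : acyclic src tgt.
Hypothesis hcp : color_paths src tgt col.
Variables (beta : V -> nat) (r : A -> nat).

Definition TT := ((V * S * nat) + (A * bool))%type.
Definition enI (a : A) (j : bool) : TT :=
  if j then (if lonely src tgt col (src a) then inr (a, true) else inl (src a, col a, r a))
  else (if lonely src tgt col (tgt a) then inr (a, false)
        else inl (tgt a, col a, beta (tgt a) - r a)).

Lemma inl_eqE (p q : V * S * nat) : (inl p == inl q :> TT) = (p == q).
Proof. by apply/eqP/eqP => [[]|->]. Qed.
Lemma inr_inl (p : A * bool) (q : V * S * nat) : (inr p == inl q :> TT) = false.
Proof. by apply/eqP. Qed.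
Lemma trip_eqE (x y : V) (s t : S) (i j : nat) :
  ((x, s, i) == (y, t, j)) = [&& x == y, s == t & i == j].
Proof. by rewrite !xpair_eqE andbA. Qed.

Lemma sum_true g x s i :
  \sum_a (enI a true == inl (x, s, i)) * g a =
  if lonely src tgt col x then 0 else (i == ov r (oarr src col x s)) * ov g (oarr src col x s).
Proof.
rewrite /oarr; case: pickP => [a0 /andP[/eqP sx /eqP cs]|hn] /=.
  rewrite (bigD1 a0) //= big1 => [|a na].
    rewrite addn0 /enI sx cs; case: (lonely _ _ _ x) => //=.
    by rewrite inl_eqE trip_eqE !eqxx eq_sym.
  rewrite /enI; case: (lonely _ _ _ (src a)); rewrite ?inr_inl ?inl_eqE ?trip_eqE //=.
  case: (eqVneq (src a) x) => [e|n]; last by [].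
  case: (eqVneq (col a) s) => [e'|n]; last by rewrite andbF.
  have := src_uniq hac hcp (etrans e (esym sx)) (etrans e' (esym cs)).
  by move=> ea; rewrite ea eqxx in na.
rewrite big1 => [|a _]; first by case: (lonely _ _ _ x); rewrite ?muln0.
rewrite /enI; case: (lonely _ _ _ (src a)); rewrite ?inr_inl ?inl_eqE ?trip_eqE //=.
by have /= h := hn a; rewrite andbA h.
Qed.

Lemma sum_false g x s i :
  \sum_a (enI a false == inl (x, s, i)) * g a =
  if lonely src tgt col x then 0
  else (i == beta x - ov r (iarr tgt col x s)) * ov g (iarr tgt col x s).
Proof.
rewrite /iarr; case: pickP => [a0 /andP[/eqP sx /eqP cs]|hn] /=.
  rewrite (bigD1 a0) //= big1 => [|a na].
    rewrite addn0 /enI sx cs; case: (lonely _ _ _ x) => //=.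
    by rewrite inl_eqE trip_eqE !eqxx eq_sym.
  rewrite /enI; case: (lonely _ _ _ (tgt a)); rewrite ?inr_inl ?inl_eqE ?trip_eqE //=.
  case: (eqVneq (tgt a) x) => [e|n]; last by [].
  case: (eqVneq (col a) s) => [e'|n]; last by rewrite andbF.
  have := tgt_uniq hac hcp (etrans e (esym sx)) (etrans e' (esym cs)).
  by move=> ea; rewrite ea eqxx in na.
rewrite big1 => [|a _]; first by case: (lonely _ _ _ x); rewrite ?muln0.
rewrite /enI; case: (lonely _ _ _ (tgt a)); rewrite ?inr_inl ?inl_eqE ?trip_eqE //=.
by have /= h := hn a; rewrite andbA h.
Qed.

Lemma phi_Lc g x s i : phi src tgt col beta r g (x, s, i) = Lc enI g (inl (x, s, i)).
Proof.
rewrite /Lc /W.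
have -> : \sum_a ((enI a true == inl (x, s, i)) + (enI a false == inl (x, s, i))) * g a =
  \sum_a (enI a true == inl (x, s, i)) * g a + \sum_a (enI a false == inl (x, s, i)) * g a.
  by rewrite -big_split; apply: eq_bigr => a _; rewrite mulnDl.
rewrite sum_true sum_false /phi; by case: (lonely _ _ _ x).
Qed.

End Inst2.

Lemma two_card (S : finType) (P : pred S) s s1 s2 :
  #|P| = 2 -> P s -> P s1 -> P s2 -> s1 != s -> s2 != s -> s1 = s2.
Proof.
move=> h2 ps p1 p2 n1 n2; apply/eqP; apply: contraT => n12.
have : 3 <= #|P|.
  have ps' : s \in P by []. have p1' : s1 \in P by []. have p2' : s2 \in P by [].
  rewrite (cardD1 s) (cardD1 s1) (cardD1 s2) !inE ps' p1' p2' n1 n2 eq_sym n12 /=.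
  by rewrite addnA; apply: leq_addr.
by rewrite h2.
Qed.

Section Deg.
Variables (V A S : finType) (src tgt : A -> V) (col : A -> S).
Hypothesis hac : acyclic src tgt.
Hypothesis hcp : color_paths src tgt col.
Variables (beta : V -> nat) (r : A -> nat).
Hypothesis hrk : rank_ok src tgt col beta r.

Local Notation inX := (inX src tgt col).
Local Notation coupled := (coupled src tgt col).
Local Notation pedge := (pedge src tgt col beta r).

Lemma oarr_some a : oarr src col (src a) (col a) = Some a.
Proof.
rewrite /oarr; case: pickP => [a' /andP[/eqP e1 /eqP e2]|hn].
  by rewrite (src_uniq hac hcp e1 e2).
by have := hn a; rewrite !eqxx.
Qed.

Lemma iarr_some a : iarr tgt col (tgt a) (col a) = Some a.
Proof.
rewrite /iarr; case: pickP => [a' /andP[/eqP e1 /eqP e2]|hn].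
  by rewrite (tgt_uniq hac hcp e1 e2).
by have := hn a; rewrite !eqxx.
Qed.

Lemma inX_src a : inX (src a) (col a).
Proof. by apply/existsP; exists a; rewrite !eqxx orbT. Qed.
Lemma inX_tgt a : inX (tgt a) (col a).
Proof. by apply/existsP; exists a; rewrite !eqxx. Qed.

Lemma r_le_tgt a : r a <= beta (tgt a).
Proof. have := hrk (inX_tgt a); rewrite iarr_some /=; lia. Qed.
Lemma r_le_src a : r a <= beta (src a).
Proof. have := hrk (inX_src a); rewrite oarr_some /=; lia. Qed.

Definition K1 (v w : V * S * nat) := let: (x, s, i) := v in
  exists s', [/\ w = (x, s', beta x - i), s' != s, inX x s', inX x s & coupled x].
Definition K2 (v w : V * S * nat) := let: (x, s, i) := v in
  exists a, [/\ src a = x, col a = s, 1 <= i, i <= r a - 1 & w = (tgt a, s, beta (tgt a) - i)].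
Definition K3 (v w : V * S * nat) := let: (x, s, i) := v in
  exists a, [/\ tgt a = x, col a = s, 1 <= beta x - i, beta x - i <= r a - 1 &
                w = (src a, s, beta x - i)].

Lemma kinds v w : pedge v w -> K1 v w \/ K2 v w \/ K3 v w.
Proof.
case: v => [[x s] i]; case: w => [[y s'] j].
rewrite /pedge /edge0 => /orP[/orP[|]|/orP[|]].
- case/andP => /eqP <- /andP[ns /andP[cx /and5P[ix ix' i1 i2 /eqP ->]]].
  by left; exists s'; split; rewrite // eq_sym.
- case/existsP => a /andP[/eqP ca /andP[/eqP ss /and5P[/eqP sa /eqP ta i1 i2 /eqP ej]]].
  by right; left; exists a; split => //; rewrite ej ss ta.
- case/andP => /eqP -> /andP[ns /andP[cx /and5P[ix ix' i1 i2 /eqP ei]]].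
  left; exists s'; split => //.
  by congr (_, _, _); lia.
- case/existsP => a /andP[/eqP ca /andP[/eqP ss /and5P[/eqP sa /eqP ta i1 i2 /eqP ei]]].
  have := r_le_tgt a; rewrite ta => ra.
  right; right; exists a; split => //; first by rewrite ca ss.
  + lia.
  + lia.
  + by rewrite sa ss; congr (_, _, _); lia.
Qed.

Lemma s11 v w w' : K1 v w -> K1 v w' -> w = w'.
Proof.
case: v => [[x s] i] [s1 [-> n1 i1 ix cx]] [s2 [-> n2 i2 _ _]].
by rewrite (two_card (eqP cx) ix i1 i2 n1 n2).
Qed.
Lemma s22 v w w' : K2 v w -> K2 v w' -> w = w'.
Proof.
case: v => [[x s] i] [a1 [e1 c1 _ _ ->]] [a2 [e2 c2 _ _ ->]].
by rewrite (src_uniq hac hcp (etrans e1 (esym e2)) (etrans c1 (esym c2))).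
Qed.
Lemma s33 v w w' : K3 v w -> K3 v w' -> w = w'.
Proof.
case: v => [[x s] i] [a1 [e1 c1 _ _ ->]] [a2 [e2 c2 _ _ ->]].
by rewrite (tgt_uniq hac hcp (etrans e1 (esym e2)) (etrans c1 (esym c2))).
Qed.
Lemma n23 v w w' : K2 v w -> K3 v w' -> False.
Proof.
case: v => [[x s] i] [a2 [e2 c2 i1 i2 _]] [a3 [e3 c3 j1 j2 _]].
have h := hrk (inX_src a2).
rewrite oarr_some e2 c2 -e3 -c3 iarr_some /= in h.
rewrite e3 in h; lia.
Qed.
Lemma n32 v w w' : K3 v w -> K2 v w' -> False.
Proof. by move=> h1 h2; apply: n23 h2 h1. Qed.

Lemma deg v w1 w2 w3 : pedge v w1 -> pedge v w2 -> pedge v w3 ->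
  w1 = w2 \/ w1 = w3 \/ w2 = w3.
Proof.
move=> h1 h2 h3.
case: (kinds h1) => [k1|[k1|k1]]; case: (kinds h2) => [k2|[k2|k2]];
  case: (kinds h3) => [k3|[k3|k3]];
  first [ by left; eauto using s11, s22, s33 | by right; left; eauto using s11, s22, s33
        | by right; right; eauto using s11, s22, s33
        | by exfalso; eauto using n23, n32 ].
Qed.

End Deg.


Section Final.
Variables (V A S : finType) (src tgt : A -> V) (col : A -> S).
Hypothesis hac : acyclic src tgt.
Hypothesis hcp : color_paths src tgt col.
Variables (beta : V -> nat) (r : A -> nat).
Hypothesis hrk : rank_ok src tgt col beta r.

Local Notation pedge := (pedge src tgt col beta r).
Local Notation theta := (theta_rel src tgt col beta r).

Lemma pedge_sym x y : pedge x y = pedge y x.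
Proof. by rewrite /Defs.pedge orbC. Qed.

Lemma theta_uniq e e1 e2 : theta e e1 -> theta e e2 -> e1 = e2.
Proof.
move=> [[_ h] [[_ h1] [n1 c1]]] [_ [[_ h2] [n2 c2]]].
exact: (uniq_partner pedge_sym (deg hac hcp hrk) h h1 h2 n1 n2 c1 c2).
Qed.

Lemma theta_sym e e1 : theta e e1 -> theta e1 e.
Proof.
move=> [h [h1 [n1 c1]]]; split=> //; split=> //; split; first by rewrite eq_sym.
exact: (conn_sym pedge_sym c1).
Qed.

Definition ptI (x : TT V A S) : option (TT V A S) :=
  match x with
  | inl e => match excluded_middle_informative (exists e', theta e e') with
             | left H => Some (inl (proj1_sig (constructive_indefinite_description _ H)))
             | right _ => None
             end
  | inr _ => None
  end.

Lemma ptI_spec x y : ptI x = Some y -> exists e e', [/\ x = inl e, y = inl e' & theta e e'].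
Proof.
case: x => [e|//] /=.
case: excluded_middle_informative => [H|//] [<-].
case: constructive_indefinite_description => e' he /=.
by exists e, e'.
Qed.

Lemma ptI_theta e e' : theta e e' -> ptI (inl e) = Some (inl e').
Proof.
move=> h /=; case: excluded_middle_informative => [H|hn]; last by exfalso; apply: hn; exists e'.
case: constructive_indefinite_description => e'' he /=.
by rewrite (theta_uniq he h).
Qed.

Lemma ptI_sym x y : ptI x = Some y -> ptI y = Some x.
Proof.
move=> /ptI_spec [e [e' [-> -> h]]]; exact: ptI_theta (theta_sym h).
Qed.

Lemma ptI_neq x y : ptI x = Some y -> x != y.
Proof.
move=> /ptI_spec [e [e' [-> -> [_ [_ [n _]]]]]].
by apply: contra n => /eqP [->].
Qed.

Lemma inU_inUa u : inU src tgt col beta r u -> inUa ptI (enI src tgt col beta r) u.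
Proof.
move=> hu x y /ptI_spec [[[x1 s1] i1] [[[x2 s2] i2] [-> -> h]]].
by rewrite -!phi_Lc //; apply: hu.
Qed.

Lemma inUa_inU u : inUa ptI (enI src tgt col beta r) u -> inU src tgt col beta r u.
Proof.
move=> hu [[x1 s1] i1] [[x2 s2] i2] h.
rewrite !phi_Lc //; apply: hu; exact: ptI_theta.
Qed.

End Final.


End Aux.
Import Aux.

Theorem corollary9p1 (V A S : finType) (src tgt : A -> V) (col : A -> S)
    (beta : V -> nat) (r : A -> nat) :
  acyclic src tgt ->
  color_paths src tgt col ->
  gentle src tgt col ->
  max_rank src tgt col beta r ->
  forall u : A -> nat, inU src tgt col beta r u ->
  exists gs : seq (A -> nat),
    (forall g, List.In g gs ->
       inU src tgt col beta r g /\
       (forall e, endpoint src tgt col beta r e -> phi src tgt col beta r g e <= 2)) /\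
    (forall a, u a = \sum_(g <- gs) g a).
Proof.
move=> hac hcp _ [hrk _] u hu.
have hUa := inU_inUa hac hcp hu.
have [gs [gm gsum]] := decomp (ltnSn _) hUa.
exists gs; split=> // g hin.
have hmin := gm g hin.
split; first by apply: (inUa_inU hac hcp hrk); case: hmin.
move=> [[x s] i] _.
rewrite phi_Lc //.
exact: (min_bound (ptI_sym hac hcp hrk) (@ptI_neq V A S src tgt col beta r) (ltnSn _) hmin).
Qed.
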